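(* There exists a logically minimal, non-trivial linear inference $\phi\to\psi$ that preserves neither $\land$-lccs nor $\lor$-lccs.
   Context: Fix a countably infinite set of variables. Linear formulae on a finite set $\mathcal{V}$ of variables are defined inductively: - $\top,\bot$ are linear formulae on $\emptyset$. - $x,\neg x$ are linear formulae on $\{x\}$. - If $\phi$ is on $\mathcal{V}_1$, $\psi$ is on $\mathcal{V}_2$ and $\mathcal{V}_1\cap\mathcal{V}_2=\emptyset$, then $\phi\lor\psi$ and $\phi\land\psi$ are on $\mathcal{V}_1\cup\mathcal{V}_2$. Formulae are evaluated under Boolean assignments; two formulae are logically equivalent if they are satisfied by the same assignments. A linear inference $\phi\to\psi$ is a pair of linear formulae such that every assignment satisfying $\phi$ satisfies $\psi$. An inference $\phi\to\psi$ is trivial at a variable $x$ if $\phi[\top/x]\to\psi[\bot/x]$ is valid; it is trivial if trivial at some variable, non-trivial otherwise. A linear inference $\phi\to\psi$ is logically minimal if for every linear formula $\chi$ such that $\phi\to\chi$ and $\chi\to\psi$ are both linear inferences, $\chi$ is logically equivalent to $\phi$ or to $\psi$. For a linear formula $\phi$ and distinct variables $x,y$ occurring in it, the least common connective (lcc) of $x$ and $y$ in $\phi$ is the connective ($\lor$ or $\land$) at the root of the smallest subformula of $\phi$ containing both $x$ and $y$. An inference $\phi\to\psi$ preserves $\land$-lccs if, for all distinct variables $x,y$, whenever the lcc of $x,y$ in $\phi$ is $\land$, the lcc of $x,y$ in $\psi$ is also $\land$. It preserves $\lor$-lccs if, whenever the lcc of $x,y$ in $\phi$ is $\lor$, the lcc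 of $x,y$ in $\psi$ is also $\lor$. *)

(* Defs.v *)
From Stdlib Require Import List Arith Bool.
Import ListNotations.

Definition var := nat.

Inductive formula : Type :=
| FTop : formula
| FBot : formula
| FVar : var -> formula
| FNeg : var -> formula
| FOr  : formula -> formula -> formula
| FAnd : formula -> formula -> formula.

Fixpoint vars (f : formula) : list var :=
  match f with
  | FTop | FBot => []
  | FVar x | FNeg x => [x]
  | FOr a b | FAnd a b => vars a ++ vars b
  end.

Fixpoint linear (f : formula) : Prop :=
  match f with
  | FTop | FBot | FVar _ | FNeg _ => True
  | FOr a b | FAnd a b =>
      linear a /\ linear b /\ (forall x, In x (vars a) -> ~ In x (vars b))
  end.

Definition assignment := var -> bool.

Fixpoint eval (s : assignment) (f : formula) : bool :=
  match f with
  | FTop => true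
  | FBot => false
  | FVar x => s x
  | FNeg x => negb (s x)
  | FOr a b => eval s a || eval s b
  | FAnd a b => eval s a && eval s b
  end.

Definition entails (phi psi : formula) : Prop :=
  forall s, eval s phi = true -> eval s psi = true.

Definition log_equiv (phi psi : formula) : Prop :=
  forall s, eval s phi = eval s psi.

Definition linear_inference (phi psi : formula) : Prop :=
  linear phi /\ linear psi /\ entails phi psi.

Fixpoint subst_const (x : var) (c : bool) (f : formula) : formula :=
  match f with
  | FTop => FTop
  | FBot => FBot
  | FVar y => if Nat.eqb x y then (if c then FTop else FBot) else FVar y
  | FNeg y => if Nat.eqb x y then (if c then FBot else FTop) else FNeg y
  | FOr a b => FOr (subst_const x c a) (subst_const x c b)
  | FAnd a b => FAnd (subst_const x c a) (subst_const x c b)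
  end.

Definition trivial_at (phi psi : formula) (x : var) : Prop :=
  entails (subst_const x true phi) (subst_const x false psi).

Definition trivial (phi psi : formula) : Prop :=
  exists x, (In x (vars phi) \/ In x (vars psi)) /\ trivial_at phi psi x.

Definition nontrivial (phi psi : formula) : Prop := ~ trivial phi psi.

Definition logically_minimal (phi psi : formula) : Prop :=
  linear_inference phi psi /\
  forall chi, linear_inference phi chi -> linear_inference chi psi ->
    log_equiv chi phi \/ log_equiv chi psi.

Inductive connective : Type := COr | CAnd.

Definition occursb (x : var) (f : formula) : bool :=
  existsb (Nat.eqb x) (vars f).

Fixpoint lcc (f : formula) (x y : var) : option connective :=
  match f with
  | FTop | FBot | FVar _ | FNeg _ => None
  | FOr a b | FAnd a b =>
      let c := match f with FAnd _ _ => CAnd | _ => COr end in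
      if (occursb x a && occursb y b) || (occursb y a && occursb x b)
      then Some c
      else if occursb x a && occursb y a then lcc a x y
      else if occursb x b && occursb y b then lcc b x y
      else None
  end.

Definition preserves_lccs (c : connective) (phi psi : formula) : Prop :=
  forall x y, x <> y -> lcc phi x y = Some c -> lcc psi x y = Some c.

Definition preserves_and_lccs := preserves_lccs CAnd.
Definition preserves_or_lccs := preserves_lccs COr.

(* Main.v *)
Require Import Defs.
From Stdlib Require Import List Arith Bool Lia FunctionalExtensionality.
Import ListNotations.


Definition upd (s : assignment) (x : var) (c : bool) : assignment :=
  fun v => if Nat.eqb x v then c else s v.

Lemma eval_agree : forall f s s', (forall v, In v (vars f) -> s v = s' v) -> eval s f = eval s' f.
Proof.
  induction f; intros s s' H; simpl in *; auto;
  try (rewrite (IHf1 s s'), (IHf2 s s'); auto; intros; apply H; apply in_or_app; auto);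
  rewrite (H v); auto.
Qed.

Lemma subst_eval : forall x c f s, eval s (subst_const x c f) = eval (upd s x c) f.
Proof.
  induction f; intros s; simpl; auto.
  - unfold upd. destruct (Nat.eqb x v); destruct c; auto.
  - unfold upd. destruct (Nat.eqb x v); destruct c; auto.
  - rewrite IHf1, IHf2; auto.
  - rewrite IHf1, IHf2; auto.
Qed.

Lemma subst_vars : forall x c f, vars (subst_const x c f) = filter (fun v => negb (Nat.eqb x v)) (vars f).
Proof.
  induction f; simpl; auto.
  - destruct (Nat.eqb x v), c; auto.
  - destruct (Nat.eqb x v), c; auto.
  - rewrite filter_app, IHf1, IHf2; auto.
  - rewrite filter_app, IHf1, IHf2; auto.
Qed.

Lemma subst_linear : forall x c f, linear f -> linear (subst_const x c f).
Proof.
  induction f; simpl; intros H; auto.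
  - destruct (Nat.eqb x v), c; simpl; auto.
  - destruct (Nat.eqb x v), c; simpl; auto.
  - destruct H as [H1 [H2 H3]]; repeat split; auto.
    rewrite !subst_vars. intros y Hy Hy'. apply filter_In in Hy. apply filter_In in Hy'.
    apply (H3 y); tauto.
  - destruct H as [H1 [H2 H3]]; repeat split; auto.
    rewrite !subst_vars. intros y Hy Hy'. apply filter_In in Hy. apply filter_In in Hy'.
    apply (H3 y); tauto.
Qed.

Fixpoint ren (sg : var -> var) (f : formula) : formula :=
  match f with
  | FTop => FTop | FBot => FBot
  | FVar x => FVar (sg x) | FNeg x => FNeg (sg x)
  | FOr a b => FOr (ren sg a) (ren sg b)
  | FAnd a b => FAnd (ren sg a) (ren sg b)
  end.

Lemma ren_vars : forall sg f, vars (ren sg f) = map sg (vars f).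
Proof. induction f; simpl; auto; rewrite map_app, IHf1, IHf2; auto. Qed.

Lemma ren_eval : forall sg f s, eval s (ren sg f) = eval (fun v => s (sg v)) f.
Proof. induction f; intros; simpl; auto; rewrite IHf1, IHf2; auto. Qed.

Lemma ren_linear : forall sg, (forall x y, sg x = sg y -> x = y) ->
  forall f, linear f -> linear (ren sg f).
Proof.
  intros sg Hinj. induction f; simpl; intros H; auto;
  destruct H as [H1 [H2 H3]]; repeat split; auto;
  rewrite !ren_vars; intros y Hy Hy'; apply in_map_iff in Hy; apply in_map_iff in Hy';
  destruct Hy as [a [Ha Ha']]; destruct Hy' as [b [Hb Hb']]; subst;
  apply Hinj in Hb; subst; eapply H3; eauto.
Qed.

Fixpoint cf (f : formula) : Prop :=
  match f with
  | FTop | FBot => False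
  | FVar _ | FNeg _ => True
  | FOr a b | FAnd a b => cf a /\ cf b
  end.

Lemma cf_vars : forall f, cf f -> vars f <> [].
Proof.
  induction f; simpl; intros H; try tauto; try discriminate;
  destruct H as [H1 H2]; intro E; apply app_eq_nil in E; destruct E; apply (IHf1 H1); auto.
Qed.

Lemma normalize : forall f, linear f ->
  (forall s, eval s f = true) \/ (forall s, eval s f = false) \/
  exists g, cf g /\ linear g /\ incl (vars g) (vars f) /\ forall s, eval s g = eval s f.
Proof.
  induction f; simpl; intros H.
  - left; auto.
  - right; left; auto.
  - right; right; exists (FVar v); simpl; repeat split; auto. apply incl_refl.
  - right; right; exists (FNeg v); simpl; repeat split; auto. apply incl_refl.
  - destruct H as [H1 [H2 H3]].
    destruct (IHf1 H1) as [A|[A|[g1 [C1 [L1 [I1 E1]]]]]];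
    destruct (IHf2 H2) as [B|[B|[g2 [C2 [L2 [I2 E2]]]]]].
    all: try (left; intros s; rewrite ?A, ?B; auto using orb_true_r; fail).
    + right; left; intros; rewrite A, B; auto.
    + right; right; exists g2; repeat split; auto. apply incl_appr; auto. intros; rewrite A, E2; auto.
    + right; right; exists g1; repeat split; auto. apply incl_appl; auto. intros; rewrite B, E1, orb_false_r; auto.
    + right; right; exists (FOr g1 g2); simpl; repeat split; auto.
      * intros x X1 X2; apply (H3 x); auto.
      * apply incl_app; [apply incl_appl|apply incl_appr]; auto.
      * intros; rewrite E1, E2; auto.
  - destruct H as [H1 [H2 H3]].
    destruct (IHf1 H1) as [A|[A|[g1 [C1 [L1 [I1 E1]]]]]];
    destruct (IHf2 H2) as [B|[B|[g2 [C2 [L2 [I2 E2]]]]]].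
    all: try (right; left; intros s; rewrite ?A, ?B; auto using andb_false_r; fail).
    + left; intros; rewrite A, B; auto.
    + right; right; exists g2; repeat split; auto. apply incl_appr; auto. intros; rewrite A, E2; auto.
    + right; right; exists g1; repeat split; auto. apply incl_appl; auto. intros; rewrite B, E1, andb_true_r; auto.
    + right; right; exists (FAnd g1 g2); simpl; repeat split; auto.
      * intros x X1 X2; apply (H3 x); auto.
      * apply incl_app; [apply incl_appl|apply incl_appr]; auto.
      * intros; rewrite E1, E2; auto.
Qed.


Inductive tbl : Type := Leaf (b : bool) | Node (t0 t1 : tbl).

Fixpoint look (d : nat) (t : tbl) (s : assignment) : bool :=
  match t with
  | Leaf b => b
  | Node t0 t1 => if s d then look (S d) t1 s else look (S d) t0 s
  end.

Lemma look_indep : forall t d s s', (forall v, d <= v -> s v = s' v) -> look d t s = look d t s'.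
Proof.
  induction t; intros d s s' H; simpl; auto.
  rewrite (H d) by lia. destruct (s' d); [apply IHt2|apply IHt1]; intros; apply H; lia.
Qed.

Fixpoint tab (n d : nat) (acc : assignment) (f : assignment -> bool) : tbl :=
  match n with
  | 0 => Leaf (f acc)
  | S n' => Node (tab n' (S d) (upd acc d false) f) (tab n' (S d) (upd acc d true) f)
  end.

Lemma tab_look : forall n d acc f s,
  look d (tab n d acc f) s = f (fun v => if (d <=? v) && (v <? d + n) then s v else acc v).
Proof.
  induction n; intros d acc f s; simpl.
  - f_equal. apply functional_extensionality; intros v.
    destruct (d <=? v) eqn:E1, (v <? d + 0) eqn:E2; simpl; auto.
    apply Nat.leb_le in E1; apply Nat.ltb_lt in E2; lia.
  - destruct (s d) eqn:Sd; rewrite IHn; f_equal; apply functional_extensionality; intros v;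
    unfold upd;
    destruct (Nat.eqb_spec d v);
    destruct (S d <=? v) eqn:E1, (v <? S d + n) eqn:E2, (d <=? v) eqn:E3, (v <? d + S n) eqn:E4;
    simpl; auto;
    repeat match goal with
    | H : (_ <=? _) = true |- _ => apply Nat.leb_le in H
    | H : (_ <=? _) = false |- _ => apply Nat.leb_gt in H
    | H : (_ <? _) = true |- _ => apply Nat.ltb_lt in H
    | H : (_ <? _) = false |- _ => apply Nat.ltb_ge in H
    end; try lia; subst; auto.
Qed.

Fixpoint tmapL (op : bool -> bool -> bool) (a : bool) (u : tbl) : tbl :=
  match u with
  | Leaf b => Leaf (op a b)
  | Node u0 u1 => Node (tmapL op a u0) (tmapL op a u1)
  end.

Fixpoint tmap2 (op : bool -> bool -> bool) (t u : tbl) : tbl :=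
  match t with
  | Leaf a => tmapL op a u
  | Node t0 t1 =>
      match u with
      | Leaf b => Node (tmap2 op t0 (Leaf b)) (tmap2 op t1 (Leaf b))
      | Node u0 u1 => Node (tmap2 op t0 u0) (tmap2 op t1 u1)
      end
  end.

Lemma tmapL_look : forall op a u d s, look d (tmapL op a u) s = op a (look d u s).
Proof. induction u; intros; simpl; auto. destruct (s d); auto. Qed.

Lemma tmap2_look : forall op t u d s, look d (tmap2 op t u) s = op (look d t s) (look d u s).
Proof.
  induction t; intros u d s; simpl.
  - apply tmapL_look.
  - destruct u; simpl; destruct (s d); rewrite ?IHt1, ?IHt2; auto.
Qed.

Fixpoint tneg (t : tbl) : tbl :=
  match t with Leaf b => Leaf (negb b) | Node t0 t1 => Node (tneg t0) (tneg t1) end.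

Lemma tneg_look : forall t d s, look d (tneg t) s = negb (look d t s).
Proof. induction t; intros; simpl; auto. destruct (s d); auto. Qed.

Fixpoint prj (op : bool -> bool -> bool) (w : nat) (t : tbl) : tbl :=
  match t with
  | Leaf b => Leaf b
  | Node t0 t1 =>
      match w with
      | 0 => let u := tmap2 op t0 t1 in Node u u
      | S w' => Node (prj op w' t0) (prj op w' t1)
      end
  end.

Lemma prj_look : forall op, (forall b, op b b = b) -> forall t w d s,
  look d (prj op w t) s = op (look d t (upd s (d + w) false)) (look d t (upd s (d + w) true)).
Proof.
  intros op Hop. induction t; intros w d s; simpl.
  - rewrite Hop; destruct w; auto.
  - destruct w as [|w']; simpl.
    + rewrite Nat.add_0_r.
      assert (upd s d false d = false) as U1 by (unfold upd; rewrite Nat.eqb_refl; auto).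
      assert (upd s d true d = true) as U2 by (unfold upd; rewrite Nat.eqb_refl; auto).
      rewrite U1, U2.
      destruct (s d); rewrite tmap2_look; f_equal; apply look_indep; intros v Hv;
      unfold upd; destruct (Nat.eqb d v) eqn:E; auto; apply Nat.eqb_eq in E; lia.
    + assert (forall b, upd s (d + S w') b d = s d) as E
        by (intros; unfold upd; replace (Nat.eqb (d + S w') d) with false; auto;
            symmetry; apply Nat.eqb_neq; lia).
      rewrite !E. destruct (s d); rewrite IHt1 || rewrite IHt2;
      replace (S d + w') with (d + S w') by lia; auto.
Qed.

Definition ex1 := prj orb.
Definition fa1 := prj andb.

Fixpoint exs (W : list nat) (t : tbl) : tbl :=
  match W with [] => t | w :: W' => exs W' (ex1 w t) end.
Fixpoint fas (W : list nat) (t : tbl) : tbl :=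
  match W with [] => t | w :: W' => fas W' (fa1 w t) end.

Lemma exs_sound : forall W t s, look 0 (exs W t) s = true ->
  exists s', (forall v, ~ In v W -> s' v = s v) /\ look 0 t s' = true.
Proof.
  induction W; intros t s H; simpl in *.
  - exists s; auto.
  - destruct (IHW _ _ H) as [s1 [H1 H2]].
    unfold ex1 in H2. rewrite prj_look in H2 by (destruct b; auto). simpl in H2.
    apply orb_true_iff in H2. destruct H2 as [H2|H2]; eexists; split; try exact H2;
    intros v Hv; unfold upd; destruct (Nat.eqb a v) eqn:E;
    try (apply Nat.eqb_eq in E; subst; exfalso; apply Hv; left; auto);
    apply H1; intro; apply Hv; right; auto.
Qed.

Lemma fas_sound : forall W t s, look 0 (fas W t) s = false ->
  exists s', (forall v, ~ In v W -> s' v = s v) /\ look 0 t s' = false.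
Proof.
  induction W; intros t s H; simpl in *.
  - exists s; auto.
  - destruct (IHW _ _ H) as [s1 [H1 H2]].
    unfold fa1 in H2. rewrite prj_look in H2 by (destruct b; auto). simpl in H2.
    apply andb_false_iff in H2. destruct H2 as [H2|H2]; eexists; split; try exact H2;
    intros v Hv; unfold upd; destruct (Nat.eqb a v) eqn:E;
    try (apply Nat.eqb_eq in E; subst; exfalso; apply Hv; left; auto);
    apply H1; intro; apply Hv; right; auto.
Qed.

Fixpoint tall (t : tbl) : bool :=
  match t with Leaf b => b | Node t0 t1 => tall t0 && tall t1 end.

Lemma tall_sound : forall t d s, tall t = true -> look d t s = true.
Proof.
  induction t; intros d s H; simpl in *; auto.
  apply andb_true_iff in H; destruct H; destruct (s d); auto.
Qed.

Lemma tall_complete : forall t d, (forall s, look d t s = true) -> tall t = true.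
Proof.
  induction t; intros d H; simpl in *.
  - apply (H (fun _ => true)).
  - apply andb_true_iff; split; [apply (IHt1 (S d))|apply (IHt2 (S d))]; intros s.
    + specialize (H (upd s d false)). unfold upd at 1 in H. rewrite Nat.eqb_refl in H.
      rewrite <- H. apply look_indep. intros v Hv. unfold upd.
      destruct (Nat.eqb d v) eqn:E; auto. apply Nat.eqb_eq in E; lia.
    + specialize (H (upd s d true)). unfold upd at 1 in H. rewrite Nat.eqb_refl in H.
      rewrite <- H. apply look_indep. intros v Hv. unfold upd.
      destruct (Nat.eqb d v) eqn:E; auto. apply Nat.eqb_eq in E; lia.
Qed.

Definition tle (t u : tbl) : bool := tall (tmap2 implb t u).
Definition teq (t u : tbl) : bool := tall (tmap2 Bool.eqb t u).

Lemma tle_sound : forall t u, tle t u = true -> forall s, look 0 t s = true -> look 0 u s = true.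
Proof.
  unfold tle; intros t u H s H1. apply (tall_sound _ 0 s) in H. rewrite tmap2_look, H1 in H. auto.
Qed.

Lemma tle_complete : forall t u, (forall s, look 0 t s = true -> look 0 u s = true) -> tle t u = true.
Proof.
  unfold tle; intros t u H. apply (tall_complete _ 0). intros s. rewrite tmap2_look.
  destruct (look 0 t s) eqn:E; simpl; auto.
Qed.

Lemma teq_sound : forall t u, teq t u = true -> forall s, look 0 t s = look 0 u s.
Proof.
  unfold teq; intros t u H s. apply (tall_sound _ 0 s) in H. rewrite tmap2_look in H.
  apply Bool.eqb_prop; auto.
Qed.


Definition V9 : list nat := seq 0 9.
Definition inb (x : nat) (l : list nat) : bool := existsb (Nat.eqb x) l.
Lemma inb_In : forall x l, inb x l = true <-> In x l.
Proof.
  intros x l; unfold inb; rewrite existsb_exists; split.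
  - intros [y [H1 H2]]; apply Nat.eqb_eq in H2; subst; auto.
  - intros H; exists x; rewrite Nat.eqb_refl; auto.
Qed.

Definition compl (A : list nat) : list nat := filter (fun v => negb (inb v A)) V9.
Definition ff : assignment := fun _ => false.
Definition tf (f : formula) : tbl := tab 9 0 ff (fun s => eval s f).
Definition litv (u : nat) : tbl := tab 9 0 ff (fun s => s u).
Definition litn (u : nat) : tbl := tab 9 0 ff (fun s => negb (s u)).
Definition lits (U : list nat) : list tbl := flat_map (fun u => [litv u; litn u]) U.
Definition inI (lo hi g : tbl) : bool := tle lo g && tle g hi.

Fixpoint splits (U : list nat) : list (list nat * list nat) :=
  match U with
  | [] => [([], [])]
  | u :: U' => flat_map (fun p => [(u :: fst p, snd p); (fst p, u :: snd p)]) (splits U')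
  end.
Definition nilb {A} (l : list A) : bool := match l with [] => true | _ => false end.
Definition nesplits (U : list nat) := filter (fun p => negb (nilb (fst p)) && negb (nilb (snd p))) (splits U).

Definition dedup (l : list tbl) : list tbl :=
  fold_left (fun acc t => if existsb (teq t) acc then acc else t :: acc) l [].

Lemma dedup_ok : forall l t, In t l -> exists t', In t' (dedup l) /\ forall s, look 0 t' s = look 0 t s.
Proof.
  unfold dedup. intros l t.
  assert (G : forall acc, (In t l -> exists t', In t' (fold_left (fun acc t => if existsb (teq t) acc then acc else t :: acc) l acc) /\ forall s, look 0 t' s = look 0 t s) /\
     forall u, In u acc -> In u (fold_left (fun acc t => if existsb (teq t) acc then acc else t :: acc) l acc)).
  { induction l as [|x l IH]; intros acc; simpl; split; auto.
    - tauto.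
    - intros [H|H].
      + subst x. destruct (existsb (teq t) acc) eqn:Ex.
        * apply existsb_exists in Ex. destruct Ex as [u [Hu Tu]]. exists u; split.
          apply (proj2 (IH acc)); auto. intros s; symmetry; apply teq_sound; auto.
        * exists t; split; [apply (proj2 (IH _)); left; auto|auto].
      + apply (proj1 (IH _)); auto.
    - intros u Hu. apply (proj2 (IH _)). destruct (existsb (teq x) acc); simpl; auto. }
  intros H; apply (proj1 (G [])); auto.
Qed.

Fixpoint E (fuel : nat) (U : list nat) (lo hi : tbl) : list tbl :=
  match fuel with
  | 0 => []
  | S k =>
    if tle lo hi then dedup (
      filter (inI lo hi) (lits U) ++
      flat_map (fun p : list nat * list nat =>
        let A := fst p in let B := snd p in
        let nA := compl A in let nB := compl B in
        (let loA := exs nA lo in let loB := exs nB lo in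
         let hiA := fas nA (tmap2 orb (tneg loB) hi) in
         let hiB := fas nB (tmap2 orb (tneg loA) hi) in
         if tle loA hiA && tle loB hiB then
           filter (inI lo hi) (flat_map (fun ga => map (fun gb => tmap2 andb ga gb) (E k B loB hiB)) (E k A loA hiA))
         else []) ++
        (let hiA := fas nA hi in let hiB := fas nB hi in
         let loA := exs nA (tmap2 andb lo (tneg hiB)) in
         let loB := exs nB (tmap2 andb lo (tneg hiA)) in
         if tle loA hiA && tle loB hiB then
           filter (inI lo hi) (flat_map (fun ga => map (fun gb => tmap2 orb ga gb) (E k B loB hiB)) (E k A loA hiA))
         else [])) (nesplits U))
    else []
  end.

Definition sem (t : tbl) (g : formula) := forall s, look 0 t s = eval s g.

Lemma tab9 : forall (f : assignment -> bool), (forall s s', (forall v, v < 9 -> s v = s' v) -> f s = f s') ->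
  forall s, look 0 (tab 9 0 ff f) s = f s.
Proof.
  intros f Hf s. rewrite tab_look. apply Hf. intros v Hv. simpl.
  replace (v <? 9) with true; auto. symmetry; apply Nat.ltb_lt; auto.
Qed.

Lemma tf_sem : forall f, (forall v, In v (vars f) -> v < 9) -> sem (tf f) f.
Proof.
  intros f H s. unfold tf. apply tab9. intros s1 s2 E. apply eval_agree. intros; apply E; auto.
Qed.

Lemma splits_in : forall (P : nat -> bool) U,
  In (filter P U, filter (fun x => negb (P x)) U) (splits U).
Proof.
  intros P; induction U as [|u U IH]; simpl; auto.
  apply in_flat_map. eexists; split; [exact IH|]. simpl.
  destruct (P u); simpl; auto.
Qed.

Lemma filter_len : forall (P : nat -> bool) U,
  length (filter P U) + length (filter (fun x => negb (P x)) U) = length U.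
Proof. intros P; induction U; simpl; auto. destruct (P a); simpl; lia. Qed.

Lemma tle_of : forall t u, (forall s, look 0 t s = true -> look 0 u s = true) -> tle t u = true.
Proof. apply tle_complete. Qed.

Lemma compl_notin : forall A v, In v A -> ~ In v (compl A).
Proof.
  intros A v H H'. unfold compl in H'. apply filter_In in H'. destruct H' as [_ H'].
  apply negb_true_iff in H'. assert (inb v A = true) by (apply inb_In; auto). congruence.
Qed.

Lemma agree_out : forall (g : formula) A s s', incl (vars g) A ->
  (forall v, ~ In v (compl A) -> s' v = s v) -> eval s' g = eval s g.
Proof.
  intros g A s s' Hi H. apply eval_agree. intros v Hv. apply H. apply compl_notin. apply Hi; auto.
Qed.

Lemma lo_proj : forall lo g A, incl (vars g) A ->
  (forall s, look 0 lo s = true -> eval s g = true) ->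
  forall s, look 0 (exs (compl A) lo) s = true -> eval s g = true.
Proof.
  intros lo g A Hi H s Hs. destruct (exs_sound _ _ _ Hs) as [s' [H1 H2]].
  rewrite <- (agree_out g A s s'); auto.
Qed.

Lemma hi_proj : forall hi g A, incl (vars g) A ->
  (forall s, eval s g = true -> look 0 hi s = true) ->
  forall s, eval s g = true -> look 0 (fas (compl A) hi) s = true.
Proof.
  intros hi g A Hi H s Hs. destruct (look 0 (fas (compl A) hi) s) eqn:E; auto.
  destruct (fas_sound _ _ _ E) as [s' [H1 H2]].
  rewrite <- (agree_out g A s s') in Hs; auto. rewrite H in H2; auto.
Qed.

Lemma E_complete : forall k U lo hi g, cf g -> linear g -> incl (vars g) U -> length U <= k ->
  (forall u, In u U -> u < 9) ->
  (forall s, look 0 lo s = true -> eval s g = true) ->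
  (forall s, eval s g = true -> look 0 hi s = true) ->
  exists t, In t (E k U lo hi) /\ sem t g.
Proof.
  induction k as [|k IH]; intros U lo hi g Hcf Hlin Hinc Hlen HU Hlo Hhi.
  - exfalso. destruct U; [|simpl in Hlen; lia].
    apply (cf_vars g Hcf). destruct (vars g) as [|v l] eqn:Ev; auto.
    exfalso; apply (Hinc v); try rewrite Ev; left; auto.
  - simpl. assert (Hlh : tle lo hi = true) by (apply tle_of; auto). rewrite Hlh.
    assert (inI_ok : forall t, sem t g -> inI lo hi t = true).
    { intros t St. unfold inI. apply andb_true_iff; split; apply tle_of; intros s; rewrite ?St; auto. }
    cut (exists t, In t (filter (inI lo hi) (lits U) ++
      flat_map (fun p : list nat * list nat =>
        let A := fst p in let B := snd p in
        let nA := compl A in let nB := compl B in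
        (let loA := exs nA lo in let loB := exs nB lo in
         let hiA := fas nA (tmap2 orb (tneg loB) hi) in
         let hiB := fas nB (tmap2 orb (tneg loA) hi) in
         if tle loA hiA && tle loB hiB then
           filter (inI lo hi) (flat_map (fun ga => map (fun gb => tmap2 andb ga gb) (E k B loB hiB)) (E k A loA hiA))
         else []) ++
        (let hiA := fas nA hi in let hiB := fas nB hi in
         let loA := exs nA (tmap2 andb lo (tneg hiB)) in
         let loB := exs nB (tmap2 andb lo (tneg hiA)) in
         if tle loA hiA && tle loB hiB then
           filter (inI lo hi) (flat_map (fun ga => map (fun gb => tmap2 orb ga gb) (E k B loB hiB)) (E k A loA hiA))
         else [])) (nesplits U)) /\ sem t g).
    { intros [t [Ht St]]. destruct (dedup_ok _ _ Ht) as [t' [H1 H2]]. exists t'; split; auto.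
      intros s; rewrite H2; auto. }
    destruct g as [| |u|u|a b|a b]; simpl in Hcf; try tauto.
    + exists (litv u); split.
      * apply in_or_app; left. apply filter_In; split.
        -- unfold lits. apply in_flat_map. exists u; split; [apply Hinc; simpl; auto|simpl; auto].
        -- apply inI_ok. intros s. unfold litv. rewrite tab9; auto.
           intros s1 s2 E. apply E. apply HU, Hinc; simpl; auto.
      * intros s. unfold litv. rewrite tab9; auto.
        intros s1 s2 E. apply E. apply HU, Hinc; simpl; auto.
    + exists (litn u); split.
      * apply in_or_app; left. apply filter_In; split.
        -- unfold lits. apply in_flat_map. exists u; split; [apply Hinc; simpl; auto|simpl; auto].
        -- apply inI_ok. intros s. unfold litn. rewrite tab9; auto.
           intros s1 s2 E. rewrite E; auto. apply HU, Hinc; simpl; auto.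
      * intros s. unfold litn. rewrite tab9; auto.
        intros s1 s2 E. rewrite E; auto. apply HU, Hinc; simpl; auto.
    +
      destruct Hcf as [Ca Cb]. destruct Hlin as [La [Lb Dab]].
      set (P := fun x => inb x (vars a)).
      set (A := filter P U). set (B := filter (fun x => negb (P x)) U).
      assert (IA : incl (vars a) A).
      { intros v Hv. apply filter_In; split. apply Hinc; simpl; apply in_or_app; auto. unfold P; apply inb_In; auto. }
      assert (IB : incl (vars b) B).
      { intros v Hv. apply filter_In; split. apply Hinc; simpl; apply in_or_app; auto.
        apply negb_true_iff. destruct (P v) eqn:Pv; auto. unfold P in Pv; apply inb_In in Pv. exfalso; apply (Dab v); auto. }
      assert (NA : A <> []). { intro N. apply (cf_vars a Ca). destruct (vars a) as [|v l] eqn:Ev; auto.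
        exfalso. assert (In v A) by (apply IA; try rewrite Ev; left; auto). rewrite N in H; auto. }
      assert (NB : B <> []). { intro N. apply (cf_vars b Cb). destruct (vars b) as [|v l] eqn:Ev; auto.
        exfalso. assert (In v B) by (apply IB; try rewrite Ev; left; auto). rewrite N in H; auto. }
      assert (LAB := filter_len P U). fold A B in LAB.
      assert (LA : length A <= k). { assert (length B <> 0) by (intro Z; apply NB; apply length_zero_iff_nil; auto). unfold var in *; lia. }
      assert (LB : length B <= k). { assert (length A <> 0) by (intro Z; apply NA; apply length_zero_iff_nil; auto). unfold var in *; lia. }
      assert (UA : forall u, In u A -> u < 9). { intros u Hu. apply filter_In in Hu. apply HU; tauto. }
      assert (UB : forall u, In u B -> u < 9). { intros u Hu. apply filter_In in Hu. apply HU; tauto. }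
      set (nA := compl A). set (nB := compl B).
      set (hiA := fas nA hi). set (hiB := fas nB hi).
      set (loA := exs nA (tmap2 andb lo (tneg hiB))).
      set (loB := exs nB (tmap2 andb lo (tneg hiA))).
      assert (HhiA : forall s, eval s a = true -> look 0 hiA s = true).
      { apply hi_proj; auto. intros s Hs; apply Hhi; simpl; rewrite Hs; auto. }
      assert (HhiB : forall s, eval s b = true -> look 0 hiB s = true).
      { apply hi_proj; auto. intros s Hs; apply Hhi; simpl; rewrite Hs, orb_true_r; auto. }
      assert (HloA : forall s, look 0 loA s = true -> eval s a = true).
      { apply lo_proj; auto. intros s Hs. rewrite tmap2_look, tneg_look in Hs.
        apply andb_true_iff in Hs; destruct Hs as [H1 H2]. apply Hlo in H1. simpl in H1.
        destruct (eval s b) eqn:Eb; [rewrite HhiB in H2; auto; discriminate|].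
        rewrite orb_false_r in H1; auto. }
      assert (HloB : forall s, look 0 loB s = true -> eval s b = true).
      { apply lo_proj; auto. intros s Hs. rewrite tmap2_look, tneg_look in Hs.
        apply andb_true_iff in Hs; destruct Hs as [H1 H2]. apply Hlo in H1. simpl in H1.
        destruct (eval s a) eqn:Ea; [rewrite HhiA in H2; auto; discriminate|]. auto. }
      destruct (IH A loA hiA a Ca La IA LA UA HloA HhiA) as [ta [Ta Sa]].
      destruct (IH B loB hiB b Cb Lb IB LB UB HloB HhiB) as [tb [Tb Sb]].
      exists (tmap2 orb ta tb). split.
      2: { intros s; rewrite tmap2_look, Sa, Sb; auto. }
      apply in_or_app; right. apply in_flat_map. exists (A, B). split.
      { unfold nesplits. apply filter_In; split. apply splits_in.
        simpl. destruct A; [congruence|]. destruct B; [congruence|]. auto. }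
      simpl. fold nA nB. fold hiA hiB. fold loA loB.
      apply in_or_app; right.
      assert (E1 : tle loA hiA && tle loB hiB = true).
      { apply andb_true_iff; split; apply tle_of; intros s Hs; auto. }
      rewrite E1. apply filter_In; split.
      * apply in_flat_map. exists ta; split; auto. apply in_map; auto.
      * apply inI_ok. intros s; rewrite tmap2_look, Sa, Sb; auto.
    +
      destruct Hcf as [Ca Cb]. destruct Hlin as [La [Lb Dab]].
      set (P := fun x => inb x (vars a)).
      set (A := filter P U). set (B := filter (fun x => negb (P x)) U).
      assert (IA : incl (vars a) A).
      { intros v Hv. apply filter_In; split. apply Hinc; simpl; apply in_or_app; auto. unfold P; apply inb_In; auto. }
      assert (IB : incl (vars b) B).
      { intros v Hv. apply filter_In; split. apply Hinc; simpl; apply in_or_app; auto.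
        apply negb_true_iff. destruct (P v) eqn:Pv; auto. unfold P in Pv; apply inb_In in Pv. exfalso; apply (Dab v); auto. }
      assert (NA : A <> []). { intro N. apply (cf_vars a Ca). destruct (vars a) as [|v l] eqn:Ev; auto.
        exfalso. assert (In v A) by (apply IA; try rewrite Ev; left; auto). rewrite N in H; auto. }
      assert (NB : B <> []). { intro N. apply (cf_vars b Cb). destruct (vars b) as [|v l] eqn:Ev; auto.
        exfalso. assert (In v B) by (apply IB; try rewrite Ev; left; auto). rewrite N in H; auto. }
      assert (LAB := filter_len P U). fold A B in LAB.
      assert (LA : length A <= k). { assert (length B <> 0) by (intro Z; apply NB; apply length_zero_iff_nil; auto). unfold var in *; lia. }
      assert (LB : length B <= k). { assert (length A <> 0) by (intro Z; apply NA; apply length_zero_iff_nil; auto). unfold var in *; lia. }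
      assert (UA : forall u, In u A -> u < 9). { intros u Hu. apply filter_In in Hu. apply HU; tauto. }
      assert (UB : forall u, In u B -> u < 9). { intros u Hu. apply filter_In in Hu. apply HU; tauto. }
      set (nA := compl A). set (nB := compl B).
      set (loA := exs nA lo). set (loB := exs nB lo).
      set (hiA := fas nA (tmap2 orb (tneg loB) hi)).
      set (hiB := fas nB (tmap2 orb (tneg loA) hi)).
      assert (HloA : forall s, look 0 loA s = true -> eval s a = true).
      { apply lo_proj; auto. intros s Hs. apply Hlo in Hs. simpl in Hs. apply andb_true_iff in Hs; tauto. }
      assert (HloB : forall s, look 0 loB s = true -> eval s b = true).
      { apply lo_proj; auto. intros s Hs. apply Hlo in Hs. simpl in Hs. apply andb_true_iff in Hs; tauto. }
      assert (HhiA : forall s, eval s a = true -> look 0 hiA s = true).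
      { apply hi_proj; auto. intros s Hs. rewrite tmap2_look, tneg_look.
        destruct (look 0 loB s) eqn:Lb'; simpl; auto. apply Hhi. simpl. rewrite Hs, HloB; auto. }
      assert (HhiB : forall s, eval s b = true -> look 0 hiB s = true).
      { apply hi_proj; auto. intros s Hs. rewrite tmap2_look, tneg_look.
        destruct (look 0 loA s) eqn:La'; simpl; auto. apply Hhi. simpl. rewrite Hs, HloA; auto. }
      destruct (IH A loA hiA a Ca La IA LA UA HloA HhiA) as [ta [Ta Sa]].
      destruct (IH B loB hiB b Cb Lb IB LB UB HloB HhiB) as [tb [Tb Sb]].
      exists (tmap2 andb ta tb). split.
      2: { intros s; rewrite tmap2_look, Sa, Sb; auto. }
      apply in_or_app; right. apply in_flat_map. exists (A, B). split.
      { unfold nesplits. apply filter_In; split. apply splits_in.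
        simpl. destruct A; [congruence|]. destruct B; [congruence|]. auto. }
      simpl. fold nA nB. fold loA loB. fold hiA hiB.
      apply in_or_app; left.
      assert (E1 : tle loA hiA && tle loB hiB = true).
      { apply andb_true_iff; split; apply tle_of; intros s Hs; auto. }
      rewrite E1. apply filter_In; split.
      * apply in_flat_map. exists ta; split; auto. apply in_map; auto.
      * apply inI_ok. intros s; rewrite tmap2_look, Sa, Sb; auto.
Qed.


Definition phi0 := FAnd (FOr (FAnd (FVar 0) (FVar 1)) (FAnd (FVar 2) (FVar 3))) (FOr (FAnd (FVar 4) (FVar 5)) (FAnd (FVar 6) (FVar 7))).
Definition psi0 := FOr (FAnd (FVar 0) (FVar 4)) (FAnd (FOr (FAnd (FVar 1) (FVar 6)) (FVar 2)) (FOr (FAnd (FVar 3) (FVar 5)) (FVar 7))).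

Definition chk := forallb (fun t => teq t (tf phi0) || teq t (tf psi0)) (E 9 V9 (tf phi0) (tf psi0)).
Lemma chk_ok : forallb (fun t => teq t (tf phi0) || teq t (tf psi0)) (E 9 V9 (tf phi0) (tf psi0)) = true. Proof. vm_compute. reflexivity. Qed.

Lemma phi0_vars : forall v, In v (vars phi0) -> v < 8.
Proof. simpl; intros v H; repeat (destruct H as [H|H]; [subst; lia|]); destruct H. Qed.
Lemma psi0_vars : forall v, In v (vars psi0) -> v < 8.
Proof. simpl; intros v H; repeat (destruct H as [H|H]; [subst; lia|]); destruct H. Qed.

Lemma phi0_sem : forall s, look 0 (tf phi0) s = eval s phi0.
Proof. apply tf_sem. intros v H; apply phi0_vars in H; lia. Qed.
Lemma psi0_sem : forall s, look 0 (tf psi0) s = eval s psi0.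
Proof. apply tf_sem. intros v H; apply psi0_vars in H; lia. Qed.
Opaque tf.

Lemma fin : forall t, In t (E 9 V9 (tf phi0) (tf psi0)) ->
  (forall s, look 0 t s = eval s phi0) \/ (forall s, look 0 t s = eval s psi0).
Proof.
  intros t Ht. assert (CK := proj1 (forallb_forall _ _) chk_ok t Ht). cbv beta in CK.
  apply orb_true_iff in CK. destruct CK as [CK|CK].
  - left. intros s. rewrite <- phi0_sem. apply teq_sound. exact CK.
  - right. intros s. rewrite <- psi0_sem. apply teq_sound. exact CK.
Qed.

Lemma ent_tab : tle (tf phi0) (tf psi0) = true. Proof. vm_compute. reflexivity. Qed.
Lemma ent0 : entails phi0 psi0.
Proof. intros s H. rewrite <- psi0_sem. apply (tle_sound _ _ ent_tab). rewrite phi0_sem; auto. Qed.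

Lemma base : forall chi, linear chi -> (forall v, In v (vars chi) -> v < 9) ->
  entails phi0 chi -> entails chi psi0 -> log_equiv chi phi0 \/ log_equiv chi psi0.
Proof.
  intros chi Hl Hv H1 H2.
  destruct (normalize chi Hl) as [T|[F|[g [Cg [Lg [Ig Eg]]]]]].
  - exfalso. specialize (H2 ff (T ff)). vm_compute in H2. discriminate.
  - exfalso. specialize (H1 (fun _ => true) eq_refl). rewrite F in H1. discriminate.
  - destruct (E_complete 9 V9 (tf phi0) (tf psi0) g Cg Lg) as [t [Ht St]].
    + intros v Hv'. apply in_seq. specialize (Hv v (Ig v Hv')). lia.
    + simpl; lia.
    + intros u Hu. apply in_seq in Hu. lia.
    + intros s Hs. rewrite phi0_sem in Hs. rewrite Eg. auto.
    + intros s Hs. rewrite psi0_sem. rewrite Eg in Hs. auto.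
    + destruct (fin t Ht) as [K|K]; [left|right]; intros s; rewrite <- Eg, <- St; apply K.
Qed.

Definition substs (L : list var) (f : formula) : formula :=
  fold_right (fun v acc => subst_const v false acc) f L.

Lemma substs_eval : forall L f s, eval s (substs L f) = eval (fun v => if inb v L then false else s v) f.
Proof.
  induction L as [|x L IH]; intros f s; simpl.
  - apply eval_agree; auto.
  - rewrite subst_eval, IH. apply eval_agree. intros v _. unfold upd, inb. simpl.
    rewrite (Nat.eqb_sym v x). destruct (Nat.eqb x v); simpl; auto; destruct (existsb (Nat.eqb v) L); auto.
Qed.

Lemma substs_linear : forall L f, linear f -> linear (substs L f).
Proof. induction L; simpl; auto. intros; apply subst_linear; auto. Qed.

Lemma substs_vars : forall L f v, In v (vars (substs L f)) -> In v (vars f) /\ ~ In v L.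
Proof.
  induction L as [|x L IH]; simpl; intros f v H; auto.
  rewrite subst_vars in H. apply filter_In in H. destruct H as [H1 H2].
  apply IH in H1. destruct H1; split; auto. intros [E|E]; auto. subst. rewrite Nat.eqb_refl in H2. discriminate.
Qed.

Definition swp (z : var) : var -> var := fun v => if Nat.eqb v z then 8 else if Nat.eqb v 8 then z else v.

Lemma swp_inj : forall z x y, swp z x = swp z y -> x = y.
Proof.
  unfold swp; intros z x y.
  destruct (Nat.eqb_spec x z), (Nat.eqb_spec y z), (Nat.eqb_spec x 8), (Nat.eqb_spec y 8); intros; subst; auto; lia.
Qed.

Definition pt (b : bool) : assignment := fun v => (v =? 0) || (v =? 4) || (b && (v =? 8)).

Lemma mixing : forall chi z X0 X1, 8 <= z -> linear chi ->
  ((X0 = phi0 /\ X1 = psi0) \/ (X0 = psi0 /\ X1 = phi0)) ->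
  (forall s, eval s chi = if s z then eval s X1 else eval s X0) -> False.
Proof.
  intros chi z X0 X1 Hz Hl HX Hc.
  assert (HXv : forall X v, (X = phi0 \/ X = psi0) -> In v (vars X) -> v < 8).
  { intros X v [E|E] H; subst; [apply phi0_vars|apply psi0_vars]; auto. }
  set (chi2 := ren (swp z) chi).
  set (L := filter (fun v => 9 <=? v) (vars chi2)).
  set (chi3 := substs L chi2).
  assert (M : forall s, eval s chi3 = if s 8 then eval s X1 else eval s X0).
  { intros s. unfold chi3. rewrite substs_eval. unfold chi2. rewrite ren_eval, Hc.
    assert (Hs8 : swp z z = 8) by (unfold swp; rewrite Nat.eqb_refl; auto).
    rewrite Hs8.
    assert (Hin8 : inb 8 L = false).
    { destruct (inb 8 L) eqn:E; auto. apply inb_In in E. unfold L in E. apply filter_In in E.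
      destruct E as [_ E]. apply Nat.leb_le in E. lia. }
    rewrite Hin8.
    assert (AG : forall X, (X = phi0 \/ X = psi0) ->
      eval (fun v => (if inb (swp z v) L then false else s (swp z v))) X = eval s X).
    { intros X HX'. apply eval_agree. intros v Hv. assert (v < 8) by (eapply HXv; eauto).
      assert (swp z v = v) as ->.
      { unfold swp. destruct (Nat.eqb_spec v z); [lia|]. destruct (Nat.eqb_spec v 8); [lia|auto]. }
      destruct (inb v L) eqn:E; auto. apply inb_In in E. unfold L in E. apply filter_In in E.
      destruct E as [_ E]. apply Nat.leb_le in E. lia. }
    destruct HX as [[-> ->]|[-> ->]]; destruct (s 8); apply AG; auto. }
  assert (Hl3 : linear chi3).
  { apply substs_linear. apply ren_linear; auto. intros x y; apply swp_inj. }
  assert (Hv3 : forall v, In v (vars chi3) -> v < 9).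
  { intros v Hv. apply substs_vars in Hv. destruct Hv as [H1 H2].
    destruct (le_lt_dec 9 v); auto. exfalso; apply H2. unfold L. apply filter_In; split; auto.
    apply Nat.leb_le; auto. }
  assert (Hp0 : forall b, eval (pt b) phi0 = false) by (destruct b; reflexivity).
  assert (Hq0 : forall b, eval (pt b) psi0 = true) by (destruct b; reflexivity).
  assert (P8 : forall b, pt b 8 = b) by (destruct b; reflexivity).
  assert (H1 : entails phi0 chi3).
  { intros s Hs. rewrite M. destruct HX as [[-> ->]|[-> ->]]; destruct (s 8); auto; apply ent0; auto. }
  assert (H2 : entails chi3 psi0).
  { intros s Hs. rewrite M in Hs. destruct HX as [[-> ->]|[-> ->]]; destruct (s 8); auto; apply ent0; auto. }
  destruct (base chi3 Hl3 Hv3 H1 H2) as [Q|Q].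
  - destruct HX as [[-> ->]|[-> ->]].
    + specialize (Q (pt true)). rewrite M, P8, Hp0, Hq0 in Q. discriminate.
    + specialize (Q (pt false)). rewrite M, P8, Hp0, Hq0 in Q. discriminate.
  - destruct HX as [[-> ->]|[-> ->]].
    + specialize (Q (pt false)). rewrite M, P8, Hp0, Hq0 in Q. discriminate.
    + specialize (Q (pt true)). rewrite M, P8, Hp0, Hq0 in Q. discriminate.
Qed.


Fixpoint linearb (f : formula) : bool :=
  match f with
  | FOr a b | FAnd a b => linearb a && linearb b && forallb (fun x => negb (inb x (vars b))) (vars a)
  | _ => true
  end.

Lemma linearb_ok : forall f, linearb f = true -> linear f.
Proof.
  induction f; simpl; intros H; auto;
  apply andb_true_iff in H; destruct H as [H H3]; apply andb_true_iff in H; destruct H as [H1 H2];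
  repeat split; auto; intros x Hx Hx'; rewrite forallb_forall in H3; specialize (H3 x Hx);
  apply negb_true_iff in H3; apply inb_In in Hx'; congruence.
Qed.

Definition extra (f : formula) : nat := length (filter (fun v => 8 <=? v) (vars f)).

Lemma le_filter_drop : forall (P : nat -> bool) z (l : list nat),
  length (filter P (filter (fun v => negb (Nat.eqb z v)) l)) <= length (filter P l).
Proof.
  intros P z l; induction l as [|y l IH]; simpl; auto.
  destruct (negb (Nat.eqb z y)); simpl; destruct (P y); simpl; lia.
Qed.

Lemma filter_drop : forall (P : nat -> bool) z (l : list nat), In z l -> P z = true ->
  length (filter P (filter (fun v => negb (Nat.eqb z v)) l)) < length (filter P l).
Proof.
  intros P z l; induction l as [|x l IH]; simpl; intros H Pz; [destruct H|].
  destruct H as [H|H].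
  - subst x. rewrite Nat.eqb_refl, Pz. simpl. pose proof (le_filter_drop P z l). lia.
  - specialize (IH H Pz). destruct (negb (Nat.eqb z x)); simpl; destruct (P x); simpl; lia.
Qed.

Lemma minimal_gen : forall n chi, extra chi <= n -> linear chi -> entails phi0 chi -> entails chi psi0 ->
  log_equiv chi phi0 \/ log_equiv chi psi0.
Proof.
  induction n as [|n IH]; intros chi Hn Hl H1 H2;
  destruct (filter (fun v => 8 <=? v) (vars chi)) as [|z rest] eqn:Fz.
  1,3: apply base; auto; intros v Hv; destruct (le_lt_dec 8 v) as [Hle|]; [|lia];
       exfalso; assert (In v (filter (fun v => 8 <=? v) (vars chi))) by (apply filter_In; split; auto; apply Nat.leb_le; auto);
       rewrite Fz in H; destruct H.
  - unfold extra in Hn; rewrite Fz in Hn; simpl in Hn; lia.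
  - assert (Zin : In z (filter (fun v => 8 <=? v) (vars chi))) by (rewrite Fz; left; auto).
    apply filter_In in Zin. destruct Zin as [Zin Z8]. apply Nat.leb_le in Z8.
    assert (Ph : forall X c s, (X = phi0 \/ X = psi0) -> eval (upd s z c) X = eval s X).
    { intros X c s HX. apply eval_agree. intros v Hv. unfold upd.
      destruct (Nat.eqb_spec z v); auto. subst.
      destruct HX as [->| ->]; [apply phi0_vars in Hv|apply psi0_vars in Hv]; lia. }
    assert (Sub : forall c, log_equiv (subst_const z c chi) phi0 \/ log_equiv (subst_const z c chi) psi0).
    { intros c. apply IH.
      - unfold extra. rewrite subst_vars. pose proof (filter_drop (fun v => 8 <=? v) z (vars chi) Zin) as D.
        unfold extra in Hn. rewrite Fz in D, Hn. cbn [length] in D, Hn.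
        assert (8 <=? z = true) by (apply Nat.leb_le; auto). specialize (D H). unfold var in *. lia.
      - apply subst_linear; auto.
      - intros s Hs. rewrite subst_eval. apply H1. rewrite Ph; auto.
      - intros s Hs. rewrite subst_eval in Hs. apply H2 in Hs. rewrite Ph in Hs; auto. }
    assert (Dec : forall s, eval s chi = if s z then eval s (subst_const z true chi) else eval s (subst_const z false chi)).
    { intros s. rewrite !subst_eval. destruct (s z) eqn:Sz; apply eval_agree; intros v _; unfold upd;
      destruct (Nat.eqb_spec z v); subst; auto. }
    destruct (Sub false) as [S0|S0]; destruct (Sub true) as [S1|S1].
    + left. intros s. rewrite Dec, S0, S1. destruct (s z); auto.
    + exfalso. apply (mixing chi z phi0 psi0 Z8 Hl); auto.
      intros s. rewrite Dec, S0, S1. auto.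
    + exfalso. apply (mixing chi z psi0 phi0 Z8 Hl); auto.
      intros s. rewrite Dec, S0, S1. auto.
    + right. intros s. rewrite Dec, S0, S1. destruct (s z); auto.
Qed.

Lemma nontriv_tab : forallb (fun x => negb (tle (tf (subst_const x true phi0)) (tf (subst_const x false psi0)))) (seq 0 8) = true.
Proof. vm_compute. reflexivity. Qed.

Theorem theorem3p5 :
  exists phi psi : formula,
    linear_inference phi psi /\
    logically_minimal phi psi /\
    nontrivial phi psi /\
    ~ preserves_and_lccs phi psi /\
    ~ preserves_or_lccs phi psi.
Proof.
  assert (LI : linear_inference phi0 psi0).
  { split; [apply linearb_ok; reflexivity|split; [apply linearb_ok; reflexivity|apply ent0]]. }
  exists phi0, psi0. split; [exact LI|]. split; [|split; [|split]].
  - split; [exact LI|]. intros chi [_ [Hl H1]] [_ [_ H2]].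
    apply (minimal_gen (extra chi)); auto.
  - intros [x [Hin Ht]].
    assert (Hx : x < 8) by (destruct Hin as [Hin|Hin]; [apply phi0_vars|apply psi0_vars]; auto).
    assert (K := proj1 (forallb_forall _ _) nontriv_tab x ltac:(apply in_seq; lia)).
    cbv beta in K. apply negb_true_iff in K.
    assert (T : tle (tf (subst_const x true phi0)) (tf (subst_const x false psi0)) = true).
    { apply tle_complete. intros s Hs.
      rewrite tf_sem in Hs |- *.
      - apply Ht; auto.
      - intros v Hv. rewrite subst_vars in Hv. apply filter_In in Hv. destruct Hv as [Hv _].
        first [apply psi0_vars in Hv | apply phi0_vars in Hv]; lia.
      - intros v Hv. rewrite subst_vars in Hv. apply filter_In in Hv. destruct Hv as [Hv _].
        first [apply psi0_vars in Hv | apply phi0_vars in Hv]; lia. }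
    congruence.
  - intro H. specialize (H 0 1 ltac:(lia) eq_refl). vm_compute in H. discriminate.
  - intro H. specialize (H 1 3 ltac:(lia) eq_refl). vm_compute in H. discriminate.
Qed.
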